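(* Let $G$ be a crown-free linear $3$-graph and let $e=\{x,y,z\} \in E(G)$ be an edge with $D(e) \geq \langle 5,5,4\rangle$. Let $$S = \bigcup_{f \in E(G),\ f \cap \{x,y,z\} \neq \emptyset} f$$ be the set of all vertices lying on an edge that meets $\{x,y,z\}$, and let $$E_S = \{f \in E(G) : f \cap S \neq \emptyset\}.$$ Then $|S| = 11$, every vertex in $S$ has degree at most $5$, $|E_S| \leq 13$, and every edge in $E_S$ is a subset of $S$. In other words, the subgraph $G[S]$ is a connected component of $G$.
   Context: A linear $3$-graph $G=(V,E)$ consists of a finite vertex set $V$ and a collection $E$ of $3$-element subsets of $V$ (edges) such that any two distinct edges share at most one vertex. The degree $d(v)$ of a vertex $v$ is the number of edges containing $v$. For an edge $e$ and positive integers $a \geq b \geq c$, write $D(e) \geq \langle a,b,c\rangle$ if one can write $e=\{u,v,w\}$ with $d(u)\geq a$, $d(v) \geq b$, $d(w) \geq c$. The crown $C_{13}$ is the linear $3$-graph on $9$ vertices $\{a,b,c,d,e,f,g,h,i\}$ with edges $\{a,b,c\},\{a,d,e\},\{b,f,g\},\{c,h,i\}$. A linear $3$-graph is crown-free if it contains no copy of $C_{13}$. *)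

(* Defs.v *)
From mathcomp Require Import all_boot.
Set Implicit Arguments. Unset Strict Implicit. Unset Printing Implicit Defensive.

Definition linear3 (T : finType) (E : {set {set T}}) : Prop :=
  (forall f, f \in E -> #|f| = 3) /\
  (forall f g, f \in E -> g \in E -> f != g -> #|f :&: g| <= 1).

Definition deg (T : finType) (E : {set {set T}}) (v : T) : nat :=
  #|[set f in E | v \in f]|.

Definition has_crown (T : finType) (E : {set {set T}}) : Prop :=
  exists (a b c d e f g h i : T),
    uniq [:: a; b; c; d; e; f; g; h; i] /\
    [set a; b; c] \in E /\ [set a; d; e] \in E /\
    [set b; f; g] \in E /\ [set c; h; i] \in E.

Definition crown_free (T : finType) (E : {set {set T}}) : Prop := ~ has_crown E.

(* Main.v *)
Require Import Defs.
From mathcomp Require Import all_boot.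
Set Implicit Arguments. Unset Strict Implicit. Unset Printing Implicit Defensive.

Section Crown.
Variables (T : finType) (E : {set {set T}}).
Hypothesis Hc : forall f, f \in E -> #|f| = 3.
Hypothesis Hl : forall f g, f \in E -> g \in E -> f != g -> #|f :&: g| <= 1.
Hypothesis Hcf : crown_free E.

Lemma L_eqv f g u v : f \in E -> g \in E -> f != g -> u \in f -> u \in g ->
  v \in f -> v \in g -> u = v.
Proof.
move=> fE gE fg uf ug vf vg; have /card_le1_eqP H := Hl fE gE fg.
by apply: H; rewrite inE ?uf ?ug ?vf ?vg.
Qed.

Lemma L_uniq f g u v : f \in E -> g \in E -> u != v -> u \in f -> u \in g ->
  v \in f -> v \in g -> f = g.
Proof.
move=> fE gE uv uf ug vf vg; apply/eqP; apply/negPn/negP => fg.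
by move/eqP: uv; apply; apply: (L_eqv fE gE fg).
Qed.

Lemma card3 (a b c : T) : #|[set a; b; c]| = 3 -> [/\ a != b, a != c & b != c].
Proof.
rewrite -setUA !cardsU1 cards1 !inE.
have [?|ab] := eqVneq a b; have [?|ac] := eqVneq a c; have [?|bc] := eqVneq b c; subst; rewrite ?eqxx //=.
Qed.

Lemma L_tri a b c : [set a; b; c] \in E -> [/\ a != b, a != c & b != c].
Proof. by move/Hc/card3. Qed.

Lemma L_eq3 f a b c : f \in E -> a \in f -> b \in f -> c \in f ->
  a != b -> a != c -> b != c -> f = [set a; b; c].
Proof.
move=> fE af bf cf ab ac bc; apply/eqP; rewrite eq_sym eqEcard.
apply/andP; split.
  by apply/subsetP => u; rewrite !inE -!orbA => /or3P[]/eqP->.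
by rewrite (Hc fE) -setUA !cardsU1 cards1 !inE negb_or ab ac bc.
Qed.

Lemma L_dec f a : f \in E -> a \in f ->
  exists b c, [/\ f = [set a; b; c], a != b, a != c & b != c].
Proof.
move=> fE af.
have : #|f :\ a| == 2 by rewrite -(eqn_add2l 1) -[1 + _]/(true + _) -af -cardsD1 (Hc fE).
case/cards2P => b [c [bc Hf]].
have : b \in f :\ a by rewrite Hf !inE eqxx.
have : c \in f :\ a by rewrite Hf !inE eqxx orbT.
rewrite !inE => /andP[ca _] /andP[ba _].
exists b, c; split; rewrite 1?eq_sym //.
by rewrite -(setD1K af) Hf setUA.
by rewrite eq_sym.
Qed.

Lemma disj_neq (A B : {set T}) u v : [disjoint A & B] -> u \in A -> v \in B -> u != v.
Proof.
move=> D uA vB; apply/eqP => uv; subst.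
by move: D; rewrite -setI_eq0 => /eqP/setP/(_ v); rewrite !inE uA vB.
Qed.

Lemma L_crown g fa fb fc a b c :
  g \in E -> fa \in E -> fb \in E -> fc \in E ->
  a \in g -> b \in g -> c \in g -> a != b -> a != c -> b != c ->
  a \in fa -> b \in fb -> c \in fc ->
  [disjoint fa & fb] -> [disjoint fa & fc] -> [disjoint fb & fc] -> False.
Proof.
move=> gE faE fbE fcE ag bg cg ab ac bc afa bfb cfc D1 D2 D3.
have Hg := L_eq3 gE ag bg cg ab ac bc.
have [d [e1 [Ha ad ae de]]] := L_dec faE afa.
have [f1 [g1 [Hb bf bg1 fg]]] := L_dec fbE bfb.
have [h [i [Hcc ch ci hi]]] := L_dec fcE cfc.
apply: Hcf; exists a, b, c, d, e1, f1, g1, h, i.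
rewrite -Hg -Ha -Hb -Hcc; split => //.
have m1 : forall p q r : T, p \in [set p; q; r] by move=> p q r; rewrite !inE eqxx.
have m2 : forall p q r : T, q \in [set p; q; r] by move=> p q r; rewrite !inE eqxx orbT.
have m3 : forall p q r : T, r \in [set p; q; r] by move=> p q r; rewrite !inE eqxx !orbT.
rewrite Ha Hb Hcc in D1 D2 D3.
rewrite /= !inE !negb_or.
repeat (apply/andP; split);
  try (by []); try (by rewrite eq_sym);
  first [ apply: (disj_neq D1); by [apply: m1|apply: m2|apply: m3]
        | apply: (disj_neq D2); by [apply: m1|apply: m2|apply: m3]
        | apply: (disj_neq D3); by [apply: m1|apply: m2|apply: m3]
        | rewrite eq_sym; apply: (disj_neq D1); by [apply: m1|apply: m2|apply: m3]
        | rewrite eq_sym; apply: (disj_neq D2); by [apply: m1|apply: m2|apply: m3]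
        | rewrite eq_sym; apply: (disj_neq D3); by [apply: m1|apply: m2|apply: m3]].
Qed.


Lemma L_bound v (P : {set T}) (Ex : {set {set T}}) : v \notin P ->
  (forall f, f \in E -> v \in f -> f \notin Ex -> ~~ [disjoint f & P]) ->
  deg E v <= #|P| + #|Ex|.
Proof.
move=> vP H.
pose M := [set f in E | (v \in f) && ~~ [disjoint f & P]].
have sub : [set f in E | v \in f] \subset M :|: Ex.
  apply/subsetP => f; rewrite !inE => /andP[fE vf].
  case fEx : (f \in Ex); first by rewrite orbT.
  by rewrite fE vf (H f fE vf) ?fEx.
rewrite /deg; apply: (leq_trans (subset_leq_card sub)).
rewrite cardsU; apply: (leq_trans (leq_subr _ _)); rewrite leq_add2r.
pose h f := odflt v [pick p in f :&: P].
have hM : forall f, f \in M -> (h f \in f) && (h f \in P).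
  move=> f; rewrite inE => /and3P[_ _]; rewrite -setI_eq0 => ne.
  rewrite /h; case: pickP => [p|]; first by rewrite inE.
  move=> H0; case/set0Pn: ne => p; by rewrite H0.
have hinj : {in M &, injective h}.
  move=> f g fM gM hfg.
  have /andP[hf hP] := hM f fM; have /andP[hg _] := hM g gM.
  move: fM gM; rewrite !inE => /and3P[fE vf _] /and3P[gE vg _].
  apply: (L_uniq fE gE (_ : h f != v) hf) => //.
    by apply/eqP => hv; move: vP; rewrite -hv hP.
  by rewrite hfg.
rewrite -(card_in_imset hinj); apply: subset_leq_card.
apply/subsetP => p /imsetP[f fM ->]; by case/andP: (hM f fM).
Qed.

Lemma L_pick v (P : {set T}) (Ex : {set {set T}}) : v \notin P ->
  #|P| + #|Ex| < deg E v ->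
  exists f, [/\ f \in E, v \in f, f \notin Ex & [disjoint f & P]].
Proof.
move=> vP H.
case: (pickP (fun f => [&& f \in E, v \in f, f \notin Ex & [disjoint f & P]])).
  by move=> f /and4P[*]; exists f.
move=> H0; have Hb : deg E v <= #|P| + #|Ex|.
  apply: (L_bound vP) => f fE vf fEx.
  by apply/negP => D; move: (H0 f); rewrite fE vf fEx D.
by rewrite leqNgt H in Hb.
Qed.

Lemma L_union v (U : {set T}) : v \in U ->
  (forall f, f \in E -> v \in f -> f \subset U) -> (deg E v).*2.+1 <= #|U|.
Proof.
move=> vU H.
pose N := [set f in E | v \in f].
pose P := [set f :\ v | f in N].
have inj : {in N &, injective (fun f => f :\ v)}.
  move=> f g; rewrite !inE => /andP[_ vf] /andP[_ vg] fg.
  by rewrite -(setD1K vf) -(setD1K vg) fg.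
have triv : trivIset P.
  apply/trivIsetP => A B /imsetP[f fN ->] /imsetP[g gN ->] ne.
  rewrite -setI_eq0; apply/eqP/setP => u; rewrite !inE.
  rewrite -!andbA; apply/negP => /and4P[uv uf _ ug].
  move: fN gN; rewrite !inE => /andP[fE vf] /andP[gE vg].
  have fg : f != g by apply: contraNneq ne => ->.
  by move/eqP: uv; apply; apply: (L_eqv fE gE fg).
have cardc : #|cover P| = (deg E v).*2.
  move/eqP: triv => <-; rewrite big_imset //=.
  rewrite (eq_bigr (fun _ => 2)); last first.
    move=> f; rewrite inE => /andP[fE vf].
    by apply/eqP; rewrite -(eqn_add2l 1) -[1 + _]/(true + _) -vf -cardsD1 (Hc fE).
  by rewrite sum_nat_const /deg -/N muln2.
have : v |: cover P \subset U.
  apply/subsetP => u; rewrite !inE => /orP[/eqP->//|].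
  case/bigcupP => A /imsetP[f fN ->]; rewrite inE => /andP[_ uf].
  move: fN; rewrite inE => /andP[fE vf]; exact: (subsetP (H f fE vf)).
move/subset_leq_card; rewrite cardsU1 cardc.
suff -> : v \notin cover P by [].
apply/negP => /bigcupP[A /imsetP[f _ ->]]; by rewrite !inE eqxx.
Qed.


Lemma in1 (p q r : T) : p \in [set p; q; r]. Proof. by rewrite !inE eqxx. Qed.
Lemma in2 (p q r : T) : q \in [set p; q; r]. Proof. by rewrite !inE eqxx orbT. Qed.
Lemma in3 (p q r : T) : r \in [set p; q; r]. Proof. by rewrite !inE eqxx !orbT. Qed.

Lemma L_out f g u w : f \in E -> g \in E -> f != g -> u \in f -> u \in g ->
  w \in f -> w != u -> w \notin g.
Proof.
move=> fE gE fg uf ug wf wu; apply/negP => wg.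
by move/eqP: wu; apply; apply: (L_eqv fE gE fg wf wg uf ug).
Qed.

Lemma neq_of (f g : {set T}) u : u \in f -> u \notin g -> f != g.
Proof. by move=> uf ug; apply: contraNneq ug => <-. Qed.

Lemma disjI (A B : {set T}) : (forall u, u \in A -> u \in B -> False) -> [disjoint A & B].
Proof.
move=> H; rewrite -setI_eq0; apply/eqP/setP => u; rewrite !inE.
by apply/negP => /andP[uA uB]; case: (H u uA uB).
Qed.

Lemma disjE (A B : {set T}) u : [disjoint A & B] -> u \in A -> u \in B -> False.
Proof. by move=> D uA uB; have := disj_neq D uA uB; rewrite eqxx. Qed.

Lemma L_card2 f u : f \in E -> u \in f -> #|f :\ u| = 2.
Proof.
move=> fE uf; apply/eqP.
by rewrite -(eqn_add2l 1) -[1 + _]/(true + _) -uf -cardsD1 (Hc fE).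
Qed.

Lemma in3E (u p q r : T) : u \in [set p; q; r] -> [\/ u = p, u = q | u = r].
Proof. by rewrite !inE -!orbA => /or3P[]/eqP->; [constructor 1|constructor 2|constructor 3]. Qed.

(* crown with center [set a;b;c] forces edges through a to meet B or C *)
Lemma L_meet a b c B C f : [set a; b; c] \in E ->
  B \in E -> b \in B -> B != [set a; b; c] ->
  C \in E -> c \in C -> C != [set a; b; c] -> [disjoint B & C] ->
  f \in E -> a \in f -> f != [set a; b; c] ->
  ~~ [disjoint f & (B :\ b) :|: (C :\ c)].
Proof.
move=> He BE bB Bne CE cC Cne BC fE af fne.
have [ab ac bc] := L_tri He.
have bf : b \notin f.
  by apply: (L_out He fE _ (in1 a b c) af (in2 a b c)); rewrite 1?eq_sym // eq_sym.
have cf : c \notin f.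
  by apply: (L_out He fE _ (in1 a b c) af (in3 a b c)); rewrite 1?eq_sym // eq_sym.
apply/negP => D.
apply: (L_crown He fE BE CE (in1 a b c) (in2 a b c) (in3 a b c) ab ac bc af bB cC _ _ BC).
  apply: disjI => u uf uB; apply: (disjE D uf).
  by rewrite !inE uB andbT; apply/orP; left; apply: contraNneq bf => <-.
apply: disjI => u uf uC; apply: (disjE D uf).
by rewrite !inE uC andbT; apply/orP; right; apply: contraNneq cf => <-.
Qed.

Lemma L_noe a b c B : [set a; b; c] \in E -> B \in E -> b \in B -> B != [set a; b; c] ->
  a \notin B /\ c \notin B.
Proof.
move=> He BE bB Bne; have [ab ac bc] := L_tri He.
split.
  by apply: (L_out He BE _ (in2 a b c) bB (in1 a b c)); rewrite // eq_sym.
by apply: (L_out He BE _ (in2 a b c) bB (in3 a b c)); rewrite // eq_sym.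
Qed.

Lemma L_noe3 a b c C : [set a; b; c] \in E -> C \in E -> c \in C -> C != [set a; b; c] ->
  a \notin C /\ b \notin C.
Proof.
move=> He CE cC Cne; have [ab ac bc] := L_tri He.
split.
  by apply: (L_out He CE _ (in3 a b c) cC (in1 a b c)); rewrite // eq_sym.
by apply: (L_out He CE _ (in3 a b c) cC (in2 a b c)); rewrite // eq_sym.
Qed.

Lemma card_le4 B C b c : B \in E -> C \in E -> b \in B -> c \in C ->
  #|(B :\ b) :|: (C :\ c)| <= 4.
Proof.
move=> BE CE bB cC; rewrite cardsU (L_card2 BE bB) (L_card2 CE cC).
exact: leq_subr.
Qed.

Lemma DegLemma a b c : [set a; b; c] \in E -> 5 <= deg E b -> 4 <= deg E c ->
  deg E a <= 5.
Proof.
move=> He db dc; have [ab ac bc] := L_tri He.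
have [C [CE cC CEx _]] := @L_pick c (set0) [set [set a; b; c]] ltac:(by rewrite inE)
   ltac:(by rewrite cards0 cards1; apply: leq_trans dc).
have Cne : C != [set a; b; c] by move: CEx; rewrite inE.
have [aC bC] := L_noe3 He CE cC Cne.
have [B [BE bB BEx BC]] := @L_pick b (C) [set [set a; b; c]] bC
   ltac:(by rewrite (Hc CE) cards1).
have Bne : B != [set a; b; c] by move: BEx; rewrite inE.
have [aB cB] := L_noe He BE bB Bne.
have H1 : a \notin (B :\ b) :|: (C :\ c).
  by rewrite !inE negb_or !negb_and (negbTE aB) (negbTE aC) !orbT.
have H2 : forall f, f \in E -> a \in f -> f \notin [set [set a; b; c]] ->
    ~~ [disjoint f & (B :\ b) :|: (C :\ c)].
  move=> f fE af; rewrite inE => fne.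
  exact: (L_meet He BE bB Bne CE cC Cne BC fE af fne).
have := L_bound H1 H2; rewrite cards1 addn1 => H; apply: (leq_trans H).
by rewrite ltnS card_le4.
Qed.

Lemma CoverCore a b c B C w : [set a; b; c] \in E -> 5 <= deg E a ->
  B \in E -> b \in B -> B != [set a; b; c] ->
  C \in E -> c \in C -> C != [set a; b; c] -> [disjoint B & C] ->
  w \in (B :\ b) :|: (C :\ c) ->
  exists A, [/\ A \in E, a \in A & w \in A].
Proof.
move=> He da BE bB Bne CE cC Cne BC wQ.
case: (pickP (fun A => [&& A \in E, a \in A & w \in A])).
  by move=> A /and3P[*]; exists A.
move=> Hn; exfalso.
have [aB cB] := L_noe He BE bB Bne.
have [aC bC] := L_noe3 He CE cC Cne.
have H1 : a \notin ((B :\ b) :|: (C :\ c)) :\ w.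
  by rewrite !inE negb_and negb_or !negb_and (negbTE aB) (negbTE aC) !orbT.
have : deg E a <= 4.
  have H2 : forall f, f \in E -> a \in f -> f \notin [set [set a; b; c]] ->
    ~~ [disjoint f & ((B :\ b) :|: (C :\ c)) :\ w]; last first.
    have := L_bound H1 H2; rewrite cards1 addn1 => H; apply: (leq_trans H).
    have := card_le4 BE CE bB cC; rewrite (cardsD1 w) wQ.
    by rewrite add1n ltnS.
  move=> f fE af; rewrite inE => fne.
  have wf : w \notin f by apply/negP => wf; move: (Hn f); rewrite fE af wf.
  have := L_meet He BE bB Bne CE cC Cne BC fE af fne.
  apply: contra => D; apply: disjI => u uf uQ; apply: (disjE D uf).
  rewrite in_setD1 uQ andbT; by apply: contraNneq wf => <-.
by rewrite leqNgt (leq_trans _ da).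
Qed.

Lemma CoverY a b c B w : [set a; b; c] \in E -> 5 <= deg E a -> 4 <= deg E c ->
  B \in E -> b \in B -> B != [set a; b; c] -> w \in B -> w != b ->
  exists A, [/\ A \in E, a \in A & w \in A].
Proof.
move=> He da dc BE bB Bne wB wb.
have [aB cB] := L_noe He BE bB Bne.
have cP : c \notin B :\ b by rewrite inE (negbTE cB) andbF.
have [C [CE cC CEx CD]] := @L_pick c (B :\ b) [set [set a; b; c]] cP
   ltac:(by rewrite (L_card2 BE bB) cards1).
have Cne : C != [set a; b; c] by move: CEx; rewrite inE.
have [aC bC] := L_noe3 He CE cC Cne.
have BC : [disjoint B & C].
  apply: disjI => u uB uC; have [ub|ub] := eqVneq u b.
    by subst; rewrite uC in bC.
  by apply: (disjE CD uC); rewrite in_setD1 ub uB.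
apply: (CoverCore He da BE bB Bne CE cC Cne BC).
by rewrite !inE wb wB.
Qed.

Lemma CoverZ a b c C w : [set a; b; c] \in E -> 5 <= deg E a -> 5 <= deg E b ->
  C \in E -> c \in C -> C != [set a; b; c] -> w \in C -> w != c ->
  exists A, [/\ A \in E, a \in A & w \in A].
Proof.
move=> He da db CE cC Cne wC wc.
have [aC bC] := L_noe3 He CE cC Cne.
have [B [BE bB BEx BC]] := @L_pick b (C) [set [set a; b; c]] bC
   ltac:(by rewrite (Hc CE) cards1).
have Bne : B != [set a; b; c] by move: BEx; rewrite inE.
apply: (CoverCore He da BE bB Bne CE cC Cne BC).
by rewrite !inE wc wC orbT.
Qed.


Lemma L_noe1 a b c A : [set a; b; c] \in E -> A \in E -> a \in A -> A != [set a; b; c] ->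
  b \notin A /\ c \notin A.
Proof.
move=> He AE aA Ane; have [ab ac bc] := L_tri He.
split.
  by apply: (L_out He AE _ (in1 a b c) aA (in2 a b c)); rewrite // eq_sym.
by apply: (L_out He AE _ (in1 a b c) aA (in3 a b c)); rewrite // eq_sym.
Qed.

Lemma neqC (u w : T) : u != w -> w != u. Proof. by rewrite eq_sym. Qed.

Lemma nin_neq (A : {set T}) u w : u \in A -> w \notin A -> u != w.
Proof. by move=> uA wA; apply: contraNneq wA => <-. Qed.

Lemma Cyc p q r C Q v k m : [set p; q; r] \in E ->
  5 <= deg E p -> 5 <= deg E q -> 4 <= deg E r ->
  C \in E -> r \in C -> v \in C -> k \in C -> C != [set p; q; r] ->
  v != r -> k != r -> v != k ->
  Q \in E -> q \in Q -> v \in Q -> m \in Q -> Q != [set p; q; r] ->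
  m != q -> m != v ->
  [set p; k; m] \in E.
Proof.
move=> He dp dq dr CE rC vC kC Cne vr kr vk QE qQ vQ mQ Qne mq mv.
have [pq pr qr] := L_tri He.
have [pC qC] := L_noe3 He CE rC Cne.
have [pQ rQ] := L_noe He QE qQ Qne.
have kp : k != p := nin_neq kC pC.
have kq : k != q := nin_neq kC qC.
have mp : m != p := nin_neq mQ pQ.
have mr : m != r := nin_neq mQ rQ.
have vq : v != q := nin_neq vC qC.
have CQ : C != Q := neq_of rC rQ.
have km : k != m.
  apply/eqP => km; subst m.
  by move/eqP: vk; apply; apply: (L_eqv CE QE CQ vC vQ kC mQ).
have [Pk [PkE pPk kPk]] := CoverZ He dp dq CE rC Cne kC kr.
have [Pm [PmE pPm mPm]] := CoverY He dp dr QE qQ Qne mQ mq.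
have Pkne : Pk != [set p; q; r].
  by apply: (neq_of kPk); rewrite !inE !negb_or kp kq kr.
have Pmne : Pm != [set p; q; r].
  by apply: (neq_of mPm); rewrite !inE !negb_or mp mq mr.
case mPk : (m \in Pk).
  by rewrite -(L_eq3 PkE pPk kPk mPk _ _ km) // eq_sym.
exfalso.
have [qPm rPm] := L_noe1 He PmE pPm Pmne.
pose P := k |: ((Pm :\ p) :\ m).
have qP : q \notin P.
  by rewrite !inE negb_or eq_sym kq /= !negb_and (negbTE qPm) !orbT.
have cP : #|P| <= 2.
  rewrite cardsU1; have : #|(Pm :\ p) :\ m| = 1.
    have := L_card2 PmE pPm; rewrite (cardsD1 m) !inE mp mPm /=.
    by case.
  by move=> ->; case: (k \notin _).
have cEx : #|[set [set p; q; r]; Q]| <= 2 by rewrite cards2; case: (_ != _).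
have [B2 [B2E qB2 B2Ex B2P]] := @L_pick q P [set [set p; q; r]; Q] qP
   ltac:(apply: (leq_trans _ dq); rewrite ltnS; exact: (leq_add cP cEx)).
move: B2Ex; rewrite !inE negb_or => /andP[B2ne B2Q].
have [pB2 rB2] := L_noe He B2E qB2 B2ne.
have QB2 : Q != B2 by rewrite eq_sym.
have vB2 : v \notin B2 := L_out QE B2E QB2 qQ qB2 vQ vq.
have mB2 : m \notin B2 := L_out QE B2E QB2 qQ qB2 mQ mq.
have kB2 : k \notin B2.
  by apply/negP => kB2; apply: (disjE B2P kB2); rewrite !inE eqxx.
have Ceq := L_eq3 CE rC vC kC (neqC vr) (neqC kr) vk.
have QPm : Q != Pm by rewrite eq_sym; apply: (neq_of pPm pQ).
have PkPm : Pk != Pm by rewrite eq_sym; apply: (neq_of mPm); rewrite mPk.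
have vPm : v \notin Pm := L_out QE PmE QPm mQ mPm vQ (neqC mv).
have kPm : k \notin Pm := L_out PkE PmE PkPm pPk pPm kPk kp.
have PmE' : forall u, u \in Pm -> [\/ u = p, u = m | u \in P].
  move=> u uPm; have [->|up] := eqVneq u p; first by constructor 1.
  have [->|um] := eqVneq u m; first by constructor 2.
  by constructor 3; rewrite !inE up um uPm !orbT.
apply: (L_crown QE B2E CE PmE qQ vQ mQ (neqC vq) (neqC mq)
  (neqC mv) qB2 vC mPm).
- apply: disjI => u uB2; rewrite Ceq => /in3E[]?; subst.
  + by rewrite (negbTE rB2) in uB2.
  + by rewrite (negbTE vB2) in uB2.
  + by rewrite (negbTE kB2) in uB2.
- apply: disjI => u uB2 /PmE'[?||].
  + by subst; rewrite (negbTE pB2) in uB2.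
  + by move=> ?; subst; rewrite (negbTE mB2) in uB2.
  + by move=> uP; apply: (disjE B2P uB2 uP).
- apply: disjI => u; rewrite Ceq => /in3E[]?; subst.
  + by rewrite (negbTE rPm).
  + by rewrite (negbTE vPm).
  + by rewrite (negbTE kPm).
Qed.


Lemma L_dec2 f a b : f \in E -> a \in f -> b \in f -> a != b ->
  exists c, [/\ f = [set a; b; c], a != c & b != c].
Proof.
move=> fE af bf ab.
have [b' [c' [Hf ab' ac' bc']]] := L_dec fE af.
move: bf; rewrite Hf => /in3E[?|?|?]; subst.
- by rewrite eqxx in ab.
- by exists c'.
- by exists b'; split; rewrite // ?(eq_sym c') //; apply/setP => u; rewrite !inE orbAC.
Qed.

Lemma card4 f a b c d : f \in E -> a \in f -> b \in f -> c \in f -> d \in f ->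
  a != b -> a != c -> a != d -> b != c -> b != d -> c != d -> False.
Proof.
move=> fE af bf cf df ab ac ad bc bd cd.
move: df; rewrite (L_eq3 fE af bf cf ab ac bc) => /in3E[]?; subst.
- by rewrite eqxx in ad.
- by rewrite eqxx in bd.
- by rewrite eqxx in cd.
Qed.

Lemma pairE f G c u v : f \in E -> G \in E -> c \in G -> c \notin f ->
  u \in f -> u \in G -> v \in f -> v \in G -> u != v -> False.
Proof.
move=> fE GE cG cf uf uG vf vG uv.
have fG : f != G by rewrite eq_sym; apply: (neq_of cG cf).
by move/eqP: uv; apply; apply: (L_eqv fE GE fG uf uG vf vG).
Qed.

Lemma G4 (a0 w w' c k cM s : T) (XP XQ f : {set T}) :
  [set a0; w; w'] \in E -> [set c; w'; k] \in E -> [set cM; w; k] \in E ->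
  c \notin f -> cM \notin f -> a0 \notin f ->
  XP \in E -> XQ \in E -> a0 \in XP -> a0 \in XQ ->
  (forall u, u \in XP -> u \in XQ -> u = a0) ->
  [disjoint XP & [set c; w'; k]] -> [disjoint XQ & [set c; w'; k]] ->
  f \in E -> w \in f -> s \in f -> s \notin XP -> s \notin XQ ->
  w \notin XP -> w \notin XQ -> w != s -> False.
Proof.
move=> XcE LE ME cf cMf a0f XPE XQE aXP aXQ PQ DP DQ fE wf sf sP sQ wP wQ ws.
have [aw aw' ww'] := L_tri XcE.
have [cw' ck w'k] := L_tri LE.
have [cMw cMk wk] := L_tri ME.
have w'f : w' \notin f.
  by apply/negP => w'f; apply: (pairE fE XcE (in1 _ _ _) a0f wf (in2 _ _ _) w'f (in3 _ _ _) ww').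
have kf : k \notin f.
  by apply/negP => kf; apply: (pairE fE ME (in1 _ _ _) cMf wf (in2 _ _ _) kf (in3 _ _ _) wk).
have Lf : [disjoint f & [set c; w'; k]].
  apply: disjI => u uf /in3E[]?; subst.
  - by rewrite uf in cf.
  - by rewrite uf in w'f.
  - by rewrite uf in kf.
have crown X : X \in E -> a0 \in X -> [disjoint X & [set c; w'; k]] -> [disjoint X & f] -> False.
  move=> XE aX DX Xf.
  apply: (L_crown XcE XE fE LE (in1 _ _ _) (in2 _ _ _) (in3 _ _ _) aw aw' ww' aX wf (in2 _ _ _) Xf DX Lf).
case: (boolP [disjoint XP & f]) => [D|nP]; first by apply: (crown XP).
case: (boolP [disjoint XQ & f]) => [D|nQ]; first by apply: (crown XQ).
move: nP nQ; rewrite -!setI_eq0 => /set0Pn[u /setIP[uP uf]] /set0Pn[u' /setIP[u'Q u'f]].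
have ua : u != a0 by apply: contraNneq a0f => <-.
have u'a : u' != a0 by apply: contraNneq a0f => <-.
have uu' : u != u'.
  by apply/eqP => ?; subst; move/eqP: ua; apply; apply: PQ.
apply: (card4 fE wf sf uf u'f ws _ _ _ _ uu').
- by apply/eqP => ?; subst; rewrite uP in wP.
- by apply/eqP => ?; subst; rewrite u'Q in wQ.
- by apply/eqP => ?; subst; rewrite uP in sP.
- by apply/eqP => ?; subst; rewrite u'Q in sQ.
Qed.


Ltac neqs := solve [ assumption | rewrite eq_sym; assumption ].
Ltac contra_neq := match goal with H : is_true (?a != ?a) |- _ => by rewrite eqxx in H end.
Ltac disj3 := apply: disjI => ? /in3E[]? /in3E[]?; subst; contra_neq.
Ltac pq3 := move=> ? /in3E[]? /in3E[]?; subst; first [done | contra_neq].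
Ltac inL := first [ by rewrite ?inE eqxx ?orbT | by rewrite ?inE eqxx /= ?orbT | match goal with |- is_true (_ \in ?l) => rewrite /l; by rewrite !inE eqxx ?orbT end ].
Ltac ninl := rewrite !inE ?negb_or; repeat (apply/andP; split); neqs.

Ltac g4side := first [ assumption | exact: in1 | pq3 | disj3 | ninl | neqs ].
Lemma perm23 (p q r : T) : [set p; q; r] = [set p; r; q].
Proof. by apply/setP => u; rewrite !inE orbAC. Qed.
Ltac pr := by rewrite perm23.

Lemma mainL x y z : [set x; y; z] \in E -> 5 <= deg E x -> 5 <= deg E y -> 4 <= deg E z ->
  let S := \bigcup_(f in E | f :&: [set x; y; z] != set0) f in
  let ES := [set f in E | f :&: S != set0] in
  [/\ #|S| = 11, (forall v, v \in S -> deg E v <= 5), #|ES| <= 13 &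
      (forall f, f \in ES -> f \subset S)].
Proof.
move=> He dx dy dz S ES.
have [xy xz yz] := L_tri He.
have exy : [set y; x; z] = [set x; y; z].
  by apply/setP => u; rewrite !inE (orbC (u == y)).
have Hyxz : [set y; x; z] \in E by rewrite exy.
have dx5 := DegLemma He dy dz.
have dy5 := DegLemma Hyxz dx dz.
have [C1 [C1E zC1 C1Ex _]] := @L_pick z set0 [set [set x; y; z]] ltac:(by rewrite inE)
  ltac:(by rewrite cards0 cards1; apply: leq_trans dz).
have C1ne : C1 != [set x; y; z] by move: C1Ex; rewrite inE.
have [xC1 yC1] := L_noe3 He C1E zC1 C1ne.
have [a1 [a3 [C1eq za1 za3 a1a3]]] := L_dec C1E zC1; subst C1.
have a1x : a1 != x := nin_neq (in2 _ _ _) xC1.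
have a1y : a1 != y := nin_neq (in2 _ _ _) yC1.
have a3x : a3 != x := nin_neq (in3 _ _ _) xC1.
have a3y : a3 != y := nin_neq (in3 _ _ _) yC1.
have C1ne' : [set z; a1; a3] != [set y; x; z] by rewrite exy.
have [A [AE xA a1A]] := CoverZ He dx dy C1E (in1 _ _ _) C1ne (in2 _ _ _) (neqC za1).
have [a2 [XA1eq xa2 a1a2]] := L_dec2 AE xA a1A (neqC a1x); subst A.
have [B [BE yB a1B]] := CoverZ Hyxz dy dx C1E (in1 _ _ _) C1ne' (in2 _ _ _) (neqC za1).
have [a4 [YA1eq ya4 a1a4]] := L_dec2 BE yB a1B (neqC a1y); subst B.
have XA1ne : [set x; a1; a2] != [set x; y; z].
  by apply: (neq_of (in2 _ _ _)); ninl.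
have XA1ne' : [set x; a1; a2] != [set y; x; z] by rewrite exy.
have YA1ne : [set y; a1; a4] != [set x; y; z].
  by apply: (neq_of (in2 _ _ _)); ninl.
have [yXA1 zXA1] := L_noe1 He AE (in1 _ _ _) XA1ne.
have [xYA1 zYA1] := L_noe He BE (in1 _ _ _) YA1ne.
have a2y : a2 != y := nin_neq (in3 _ _ _) yXA1.
have a2z : a2 != z := nin_neq (in3 _ _ _) zXA1.
have a4x : a4 != x := nin_neq (in3 _ _ _) xYA1.
have a4z : a4 != z := nin_neq (in3 _ _ _) zYA1.
have XA2E : [set x; a3; a4] \in E.
  exact: (Cyc He dx dy dz C1E (in1 _ _ _) (in2 _ _ _) (in3 _ _ _) C1ne (neqC za1) (neqC za3)
    a1a3 BE (in1 _ _ _) (in2 _ _ _) (in3 _ _ _) YA1ne (neqC ya4) (neqC a1a4)).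
have YA2E : [set y; a3; a2] \in E.
  exact: (Cyc Hyxz dy dx dz C1E (in1 _ _ _) (in2 _ _ _) (in3 _ _ _) C1ne' (neqC za1) (neqC za3)
    a1a3 AE (in1 _ _ _) (in2 _ _ _) (in3 _ _ _) XA1ne' (neqC xa2) (neqC a1a2)).
have [xa3 xa4 a3a4] := L_tri XA2E.
have [ya3 ya2 a3a2] := L_tri YA2E.
have [C2 [C2E zC2 C2Ex C2D]] := @L_pick z [set a2] [set [set x; y; z]; [set z; a1; a3]]
  ltac:(by rewrite inE eq_sym)
  ltac:(by rewrite cards1 cards2; case: (_ != _); [exact: dz | exact: ltnW dz]).
move: C2Ex; rewrite !inE negb_or => /andP[C2ne C2C1].
have [xC2 yC2] := L_noe3 He C2E zC2 C2ne.
have a2C2 : a2 \notin C2 by apply/negP => h; apply: (disjE C2D h); rewrite inE.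
have C1C2 : [set z; a1; a3] != C2 by rewrite eq_sym.
have a1C2 : a1 \notin C2 := L_out C1E C2E C1C2 (in1 _ _ _) zC2 (in2 _ _ _) (neqC za1).
have a3C2 : a3 \notin C2 := L_out C1E C2E C1C2 (in1 _ _ _) zC2 (in3 _ _ _) (neqC za3).
have a4C2 : a4 \notin C2.
  apply/negP => a4C2.
  have [k [C2eq zk a4k]] := L_dec2 C2E zC2 a4C2 (neqC a4z).
  have kC2 : k \in C2 by rewrite C2eq in3.
  have C2ne2 : [set z; a4; k] != [set x; y; z] by rewrite -C2eq.
  have H := Cyc He dx dy dz (C := [set z; a4; k]) (Q := [set y; a1; a4]) (v := a4) (k := k) (m := a1)
    ltac:(by rewrite -C2eq) (in1 _ _ _) (in2 _ _ _) (in3 _ _ _) C2ne2 a4z (neqC zk) a4k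
    BE (in1 _ _ _) (in3 _ _ _) (in2 _ _ _) YA1ne a1y a1a4.
  have : k \in [set x; a1; a2].
    by rewrite -(L_uniq H AE (neqC a1x) (in1 _ _ _) (in1 _ _ _) (in3 _ _ _) (in2 _ _ _)) in2.
  by case/in3E => ?; subst; [rewrite kC2 in xC2|rewrite kC2 in a1C2|rewrite kC2 in a2C2].
have [b1 [b3 [C2eq zb1 zb3 b1b3]]] := L_dec C2E zC2; subst C2.
have b1x : b1 != x := nin_neq (in2 _ _ _) xC2.
have b1y : b1 != y := nin_neq (in2 _ _ _) yC2.
have b3x : b3 != x := nin_neq (in3 _ _ _) xC2.
have b3y : b3 != y := nin_neq (in3 _ _ _) yC2.
have C2ne' : [set z; b1; b3] != [set y; x; z] by rewrite exy.
have [A [AE' xA' b1A]] := CoverZ He dx dy C2E (in1 _ _ _) C2ne (in2 _ _ _) (neqC zb1).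
have [b2 [XB1eq xb2 b1b2]] := L_dec2 AE' xA' b1A (neqC b1x); subst A.
have [B [BE' yB' b1B]] := CoverZ Hyxz dy dx C2E (in1 _ _ _) C2ne' (in2 _ _ _) (neqC zb1).
have [b4 [YB1eq yb4 b1b4]] := L_dec2 BE' yB' b1B (neqC b1y); subst B.
have XB1ne : [set x; b1; b2] != [set x; y; z].
  by apply: (neq_of (in2 _ _ _)); ninl.
have XB1ne' : [set x; b1; b2] != [set y; x; z] by rewrite exy.
have YB1ne : [set y; b1; b4] != [set x; y; z].
  by apply: (neq_of (in2 _ _ _)); ninl.
have [yXB1 zXB1] := L_noe1 He AE' (in1 _ _ _) XB1ne.
have [xYB1 zYB1] := L_noe He BE' (in1 _ _ _) YB1ne.
have b2y : b2 != y := nin_neq (in3 _ _ _) yXB1.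
have b2z : b2 != z := nin_neq (in3 _ _ _) zXB1.
have b4x : b4 != x := nin_neq (in3 _ _ _) xYB1.
have b4z : b4 != z := nin_neq (in3 _ _ _) zYB1.
have XB2E : [set x; b3; b4] \in E.
  exact: (Cyc He dx dy dz C2E (in1 _ _ _) (in2 _ _ _) (in3 _ _ _) C2ne (neqC zb1) (neqC zb3)
    b1b3 BE' (in1 _ _ _) (in2 _ _ _) (in3 _ _ _) YB1ne (neqC yb4) (neqC b1b4)).
have YB2E : [set y; b3; b2] \in E.
  exact: (Cyc Hyxz dy dx dz C2E (in1 _ _ _) (in2 _ _ _) (in3 _ _ _) C2ne' (neqC zb1) (neqC zb3)
    b1b3 AE' (in1 _ _ _) (in2 _ _ _) (in3 _ _ _) XB1ne' (neqC xb2) (neqC b1b2)).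
have [xb3 xb4 b3b4] := L_tri XB2E.
have [yb3 yb2 b3b2] := L_tri YB2E.
have b1a1 : b1 != a1 := nin_neq (in2 _ _ _) a1C2.
have b1a2 : b1 != a2 := nin_neq (in2 _ _ _) a2C2.
have b1a3 : b1 != a3 := nin_neq (in2 _ _ _) a3C2.
have b1a4 : b1 != a4 := nin_neq (in2 _ _ _) a4C2.
have b3a1 : b3 != a1 := nin_neq (in3 _ _ _) a1C2.
have b3a2 : b3 != a2 := nin_neq (in3 _ _ _) a2C2.
have b3a3 : b3 != a3 := nin_neq (in3 _ _ _) a3C2.
have b3a4 : b3 != a4 := nin_neq (in3 _ _ _) a4C2.
have b2XA1 : b2 \notin [set x; a1; a2].
  apply: (L_out AE' AE _ (in1 _ _ _) (in1 _ _ _) (in3 _ _ _) (neqC xb2)).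
  by apply: (neq_of (in2 _ _ _)); ninl.
have b2XA2 : b2 \notin [set x; a3; a4].
  apply: (L_out AE' XA2E _ (in1 _ _ _) (in1 _ _ _) (in3 _ _ _) (neqC xb2)).
  by apply: (neq_of (in2 _ _ _)); ninl.
have b4YA1 : b4 \notin [set y; a1; a4].
  apply: (L_out BE' BE _ (in1 _ _ _) (in1 _ _ _) (in3 _ _ _) (neqC yb4)).
  by apply: (neq_of (in2 _ _ _)); ninl.
have b4YA2 : b4 \notin [set y; a3; a2].
  apply: (L_out BE' YA2E _ (in1 _ _ _) (in1 _ _ _) (in3 _ _ _) (neqC yb4)).
  by apply: (neq_of (in2 _ _ _)); ninl.
have a2YA1 : a2 \notin [set y; a1; a4].
  apply: (L_out AE BE _ (in2 _ _ _) (in2 _ _ _) (in3 _ _ _) (neqC a1a2)).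
  by apply: (neq_of (in1 _ _ _)); ninl.
have b2YB1 : b2 \notin [set y; b1; b4].
  apply: (L_out AE' BE' _ (in2 _ _ _) (in2 _ _ _) (in3 _ _ _) (neqC b1b2)).
  by apply: (neq_of (in1 _ _ _)); ninl.
have b2a1 : b2 != a1 := neqC (nin_neq (in2 _ _ _) b2XA1).
have b2a2 : b2 != a2 := neqC (nin_neq (in3 _ _ _) b2XA1).
have b2a3 : b2 != a3 := neqC (nin_neq (in2 _ _ _) b2XA2).
have b2a4 : b2 != a4 := neqC (nin_neq (in3 _ _ _) b2XA2).
have b4a1 : b4 != a1 := neqC (nin_neq (in2 _ _ _) b4YA1).
have b4a4 : b4 != a4 := neqC (nin_neq (in3 _ _ _) b4YA1).
have b4a3 : b4 != a3 := neqC (nin_neq (in2 _ _ _) b4YA2).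
have b4a2 : b4 != a2 := neqC (nin_neq (in3 _ _ _) b4YA2).
have a2a4 : a2 != a4 := neqC (nin_neq (in3 _ _ _) a2YA1).
have b2b4 : b2 != b4 := neqC (nin_neq (in3 _ _ _) b2YB1).
have Hd : uniq [:: x; y; z; a1; a2; a3; a4; b1; b2; b3; b4].
  rewrite /= !inE !negb_or; repeat (apply/andP; split); by [|neqs].
pose L := [:: x; y; z; a1; a2; a3; a4; b1; b2; b3; b4].
pose s5 := [:: [set x; y; z]; [set x; a1; a2]; [set x; a3; a4]; [set x; b1; b2]; [set x; b3; b4]].
Ltac sneq := first [apply: (neq_of (in1 _ _ _)); ninl | apply: (neq_of (in2 _ _ _)); ninl
                   | apply: (neq_of (in3 _ _ _)); ninl].
have NX : forall f, f \in E -> x \in f -> f \in s5.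
  have sub : [set f in s5] \subset [set f in E | x \in f].
    apply/subsetP => f; rewrite !inE => /orP[/eqP->|/orP[/eqP->|/orP[/eqP->|/orP[/eqP->|/eqP->]]]];
      by rewrite !inE eqxx /= andbT.
  have u5 : uniq s5 by rewrite /= !inE !negb_or; repeat (apply/andP; split); by [|sneq].
  have : [set f in s5] == [set f in E | x \in f].
    rewrite eqEcard sub /=; apply: (leq_trans dx5); by rewrite cardsE (card_uniqP u5).
  move/eqP/setP => H f fE xf; by move: (H f); rewrite !inE fE xf => ->.
pose s5y := [:: [set y; x; z]; [set y; a1; a4]; [set y; a3; a2]; [set y; b1; b4]; [set y; b3; b2]].
have NY : forall f, f \in E -> y \in f -> f \in s5y.
  have sub : [set f in s5y] \subset [set f in E | y \in f].
    apply/subsetP => f; rewrite !inE => /orP[/eqP->|/orP[/eqP->|/orP[/eqP->|/orP[/eqP->|/eqP->]]]];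
      by rewrite !inE eqxx /= andbT.
  have u5 : uniq s5y by rewrite /= !inE !negb_or; repeat (apply/andP; split); by [|sneq].
  have : [set f in s5y] == [set f in E | y \in f].
    rewrite eqEcard sub /=; apply: (leq_trans dy5); by rewrite cardsE (card_uniqP u5).
  move/eqP/setP => H f fE yf; by move: (H f); rewrite !inE fE yf => ->.
have inX : forall A w, A \in E -> x \in A -> w \in A -> w \in L.
  move=> A w AE0 xA0 wA; move: (NX A AE0 xA0) wA.
  rewrite !inE => /orP[/eqP->|/orP[/eqP->|/orP[/eqP->|/orP[/eqP->|/eqP->]]]];
    by move/in3E => [] ->; inL.
have inY : forall A w, A \in E -> y \in A -> w \in A -> w \in L.
  move=> A w AE0 yA0 wA; move: (NY A AE0 yA0) wA.
  rewrite !inE => /orP[/eqP->|/orP[/eqP->|/orP[/eqP->|/orP[/eqP->|/eqP->]]]];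
    by move/in3E => [] ->; inL.
have hit : forall F, F \in E -> x \in F -> (F \in E) && (F :&: [set x; y; z] != set0).
  by move=> F FE xF; rewrite FE /=; apply/set0Pn; exists x; rewrite inE xF in1.
have inS : forall F w, F \in E -> x \in F -> w \in F -> w \in S.
  by move=> F w FE xF wF; apply/bigcupP; exists F => //; apply: hit.
have SE : S = [set w in L].
  apply/setP => w; rewrite inE; apply/idP/idP.
    case/bigcupP => f /andP[fE] /set0Pn[u /setIP[uf /in3E[]?]] wf; subst u.
    - exact: (inX f w fE uf wf).
    - exact: (inY f w fE uf wf).
    - have [fe|fne] := eqVneq f [set x; y; z].
        by subst f; move/in3E: wf => [] ->; inL.
      have [wz|wz] := eqVneq w z; first by subst; inL.
      have [A0 [A0E xA0 wA0]] := CoverZ He dx dy fE uf fne wf wz.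
      exact: (inX A0 w A0E xA0 wA0).
  rewrite !inE => /orP[/eqP->|/orP[/eqP->|/orP[/eqP->|/orP[/eqP->|/orP[/eqP->|/orP[/eqP->|
    /orP[/eqP->|/orP[/eqP->|/orP[/eqP->|/orP[/eqP->|/eqP->]]]]]]]]]].
  - exact: (inS _ _ He (in1 _ _ _) (in1 _ _ _)).
  - exact: (inS _ _ He (in1 _ _ _) (in2 _ _ _)).
  - exact: (inS _ _ He (in1 _ _ _) (in3 _ _ _)).
  - exact: (inS _ _ AE (in1 _ _ _) (in2 _ _ _)).
  - exact: (inS _ _ AE (in1 _ _ _) (in3 _ _ _)).
  - exact: (inS _ _ XA2E (in1 _ _ _) (in2 _ _ _)).
  - exact: (inS _ _ XA2E (in1 _ _ _) (in3 _ _ _)).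
  - exact: (inS _ _ AE' (in1 _ _ _) (in2 _ _ _)).
  - exact: (inS _ _ AE' (in1 _ _ _) (in3 _ _ _)).
  - exact: (inS _ _ XB2E (in1 _ _ _) (in2 _ _ _)).
  - exact: (inS _ _ XB2E (in1 _ _ _) (in3 _ _ _)).
have cardS : #|S| = 11 by rewrite SE cardsE (card_uniqP Hd).
have cl : forall f, f \in E -> f :&: S != set0 -> f \subset S.
  move=> f fE /set0Pn[w /setIP[wf wS]].
  case: (boolP (f :&: [set x; y; z] != set0)) => fe.
    by apply/subsetP => u uf; apply/bigcupP; exists f; rewrite ?fE.
  have nf : forall u, u \in [set x; y; z] -> u \notin f.
    move=> u ue; apply/negP => uf; move: fe; rewrite negbK => /eqP/setP/(_ u).
    by rewrite in_setI uf ue in_set0.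
  have xf := nf x (in1 _ _ _); have yf := nf y (in2 _ _ _); have zf := nf z (in3 _ _ _).
  apply/subsetP => s sf; apply/negPn/negP => sS.
  have ws : w != s := nin_neq wS sS.
  move: sS; rewrite SE inE /L !inE !negb_or => /andP[sx /andP[sy /andP[sz /andP[sa1 /andP[sa2
    /andP[sa3 /andP[sa4 /andP[sb1 /andP[sb2 /andP[sb3 sb4]]]]]]]]]].
  move: wS; rewrite SE inE /L !inE => /orP[/eqP?|/orP[/eqP?|/orP[/eqP?|/orP[/eqP?|/orP[/eqP?|
    /orP[/eqP?|/orP[/eqP?|/orP[/eqP?|/orP[/eqP?|/orP[/eqP?|/eqP?]]]]]]]]]]; subst w.
  - by rewrite wf in xf.
  - by rewrite wf in yf.
  - by rewrite wf in zf.
  - apply: (G4 (a0:=x) (w:=a1) (w':=a2) (c:=y) (k:=a3) (cM:=z) (s:=s) (XP:=[set x; b1; b2]) (XQ:=[set x; b3; b4]) (f:=f) AE ltac:(pr) C1E);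
      by [g4side|].
  - apply: (G4 (a0:=x) (w:=a2) (w':=a1) (c:=z) (k:=a3) (cM:=y) (s:=s) (XP:=[set x; b1; b2]) (XQ:=[set x; b3; b4]) (f:=f) ltac:(pr) C1E ltac:(pr));
      by [g4side|].
  - apply: (G4 (a0:=x) (w:=a3) (w':=a4) (c:=y) (k:=a1) (cM:=z) (s:=s) (XP:=[set x; b1; b2]) (XQ:=[set x; b3; b4]) (f:=f) XA2E ltac:(pr) ltac:(pr));
      by [g4side|].
  - apply: (G4 (a0:=x) (w:=a4) (w':=a3) (c:=z) (k:=a1) (cM:=y) (s:=s) (XP:=[set x; b1; b2]) (XQ:=[set x; b3; b4]) (f:=f) ltac:(pr) ltac:(pr) ltac:(pr));
      by [g4side|].
  - apply: (G4 (a0:=x) (w:=b1) (w':=b2) (c:=y) (k:=b3) (cM:=z) (s:=s) (XP:=[set x; a1; a2]) (XQ:=[set x; a3; a4]) (f:=f) AE' ltac:(pr) C2E);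
      by [g4side|].
  - apply: (G4 (a0:=x) (w:=b2) (w':=b1) (c:=z) (k:=b3) (cM:=y) (s:=s) (XP:=[set x; a1; a2]) (XQ:=[set x; a3; a4]) (f:=f) ltac:(pr) C2E ltac:(pr));
      by [g4side|].
  - apply: (G4 (a0:=x) (w:=b3) (w':=b4) (c:=y) (k:=b1) (cM:=z) (s:=s) (XP:=[set x; a1; a2]) (XQ:=[set x; a3; a4]) (f:=f) XB2E ltac:(pr) ltac:(pr));
      by [g4side|].
  - apply: (G4 (a0:=x) (w:=b4) (w':=b3) (c:=z) (k:=b1) (cM:=y) (s:=s) (XP:=[set x; a1; a2]) (XQ:=[set x; a3; a4]) (f:=f) ltac:(pr) ltac:(pr) ltac:(pr));
      by [g4side|].
have degS : forall v, v \in S -> deg E v <= 5.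
  move=> v vS.
  have H0 : forall f, f \in E -> v \in f -> f \subset S.
    by move=> f fE vf; apply: (cl f fE); apply/set0Pn; exists v; rewrite inE vf vS.
  have := L_union vS H0; rewrite cardS => H.
  have H1 : (deg E v).*2 <= (5).*2 := H.
  by rewrite leq_double in H1.
pose s11 := [:: [set x; y; z]; [set x; a1; a2]; [set x; a3; a4]; [set x; b1; b2]; [set x; b3; b4];
  [set y; a1; a4]; [set y; a3; a2]; [set y; b1; b4]; [set y; b3; b2]; [set z; a1; a3]; [set z; b1; b3]].
Ltac pairT fE G uf vf uv := exfalso; apply: (pairE fE G (in1 _ _ _) _ uf _ vf _ uv);
  by [|rewrite !inE eqxx /= ?orbT].
have ESc : forall f, f \in ES ->
    [|| f \in s11, (a2 \in f) && (a4 \in f) | (b2 \in f) && (b4 \in f)].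
  move=> f; rewrite inE => /andP[fE fSn]; have fS := cl f fE fSn.
  case xf : (x \in f).
    move: (NX f fE xf); rewrite !inE => /orP[/eqP->|/orP[/eqP->|/orP[/eqP->|/orP[/eqP->|/eqP->]]]];
      by rewrite /s11 !inE eqxx /= ?orbT.
  case yf : (y \in f).
    move: (NY f fE yf); rewrite !inE => /orP[/eqP->|/orP[/eqP->|/orP[/eqP->|/orP[/eqP->|/eqP->]]]];
      by rewrite ?exy /s11 !inE eqxx /= ?orbT.
  move/negbT: xf => xf; move/negbT: yf => yf.
  case zf : (z \in f).
    have fne : f != [set x; y; z] by rewrite eq_sym; apply: (neq_of (in1 _ _ _) xf).
    have [u [v [feq zu zv uv]]] := L_dec fE zf; subst f.
    have uS : u \in S by apply: (subsetP fS); exact: in2.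
    have ux : u != x := nin_neq (in2 _ _ _) xf.
    have uy : u != y := nin_neq (in2 _ _ _) yf.
    rewrite SE inE /L !inE in uS; move: uS => /orP[/eqP?|/orP[/eqP?|/orP[/eqP?|/orP[/eqP?|/orP[/eqP?|
      /orP[/eqP?|/orP[/eqP?|/orP[/eqP?|/orP[/eqP?|/orP[/eqP?|/eqP?]]]]]]]]]]; subst u.
    - by rewrite eqxx in ux.
    - by rewrite eqxx in uy.
    - by rewrite eqxx in zu.
    - rewrite (L_uniq fE C1E za1 (in1 _ _ _) (in1 _ _ _) (in2 _ _ _) (in2 _ _ _)).
      by rewrite /s11 !inE eqxx /= ?orbT.
    - have H := Cyc He dx dy dz fE (in1 _ _ _) (in2 _ _ _) (in3 _ _ _) fne a2z (neqC zv) uv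
        (ltac:(pr) : [set y; a2; a3] \in E) (in1 _ _ _) (in2 _ _ _) (in3 _ _ _)
        ltac:(by apply: (neq_of (in2 _ _ _)); ninl) (neqC ya3) (a3a2).
      have := L_uniq H XA2E xa3 (in1 _ _ _) (in1 _ _ _) (in3 _ _ _) (in2 _ _ _).
      move=> Heq; have : v \in [set x; a3; a4] by rewrite -Heq in2.
      case/in3E => ?; subst v.
      + by rewrite in3 in xf.
      + by pairT fE YA2E (in2 z a2 a3) (in3 z a2 a3) (neqC a3a2).
      + by apply/or3P; constructor 2; rewrite in2 in3.
    - rewrite (L_uniq fE C1E za3 (in1 _ _ _) (in1 _ _ _) (in2 _ _ _) (in3 _ _ _)).
      by rewrite /s11 !inE eqxx /= ?orbT.
    - have H := Cyc He dx dy dz fE (in1 _ _ _) (in2 _ _ _) (in3 _ _ _) fne a4z (neqC zv) uv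
        (ltac:(pr) : [set y; a4; a1] \in E) (in1 _ _ _) (in2 _ _ _) (in3 _ _ _)
        ltac:(by apply: (neq_of (in2 _ _ _)); ninl) a1y a1a4.
      have := L_uniq H AE (neqC a1x) (in1 _ _ _) (in1 _ _ _) (in3 _ _ _) (in2 _ _ _).
      move=> Heq; have : v \in [set x; a1; a2] by rewrite -Heq in2.
      case/in3E => ?; subst v.
      + by rewrite in3 in xf.
      + by pairT fE BE (in3 z a4 a1) (in2 z a4 a1) a1a4.
      + by apply/or3P; constructor 2; rewrite in2 in3.
    - rewrite (L_uniq fE C2E zb1 (in1 _ _ _) (in1 _ _ _) (in2 _ _ _) (in2 _ _ _)).
      by rewrite /s11 !inE eqxx /= ?orbT.
    - have H := Cyc He dx dy dz fE (in1 _ _ _) (in2 _ _ _) (in3 _ _ _) fne b2z (neqC zv) uv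
        (ltac:(pr) : [set y; b2; b3] \in E) (in1 _ _ _) (in2 _ _ _) (in3 _ _ _)
        ltac:(by apply: (neq_of (in2 _ _ _)); ninl) (neqC yb3) (b3b2).
      have := L_uniq H XB2E xb3 (in1 _ _ _) (in1 _ _ _) (in3 _ _ _) (in2 _ _ _).
      move=> Heq; have : v \in [set x; b3; b4] by rewrite -Heq in2.
      case/in3E => ?; subst v.
      + by rewrite in3 in xf.
      + by pairT fE YB2E (in2 z b2 b3) (in3 z b2 b3) (neqC b3b2).
      + by apply/or3P; constructor 3; rewrite in2 in3.
    - rewrite (L_uniq fE C2E zb3 (in1 _ _ _) (in1 _ _ _) (in2 _ _ _) (in3 _ _ _)).
      by rewrite /s11 !inE eqxx /= ?orbT.
    - have H := Cyc He dx dy dz fE (in1 _ _ _) (in2 _ _ _) (in3 _ _ _) fne b4z (neqC zv) uv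
        (ltac:(pr) : [set y; b4; b1] \in E) (in1 _ _ _) (in2 _ _ _) (in3 _ _ _)
        ltac:(by apply: (neq_of (in2 _ _ _)); ninl) b1y b1b4.
      have := L_uniq H AE' (neqC b1x) (in1 _ _ _) (in1 _ _ _) (in3 _ _ _) (in2 _ _ _).
      move=> Heq; have : v \in [set x; b1; b2] by rewrite -Heq in2.
      case/in3E => ?; subst v.
      + by rewrite in3 in xf.
      + by pairT fE BE' (in3 z b4 b1) (in2 z b4 b1) b1b4.
      + by apply/or3P; constructor 3; rewrite in2 in3.
  move/negbT: zf => zf.
  pose Q1 := [set a1; a2; a3; a4]; pose Q2 := [set b1; b2; b3; b4].
  have fsub : f \subset Q1 :|: Q2.
    apply/subsetP => u uf; have uS := subsetP fS u uf.
    rewrite SE inE /L !inE in uS; move: uS => /orP[/eqP?|/orP[/eqP?|/orP[/eqP?|/orP[/eqP?|/orP[/eqP?|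
      /orP[/eqP?|/orP[/eqP?|/orP[/eqP?|/orP[/eqP?|/orP[/eqP?|/eqP?]]]]]]]]]]; subst u;
      try (by rewrite uf in xf); try (by rewrite uf in yf); try (by rewrite uf in zf);
      by rewrite !inE eqxx /= ?orbT.
  have c3 : 2 < #|f :&: Q1| + #|f :&: Q2|.
    have : #|f| <= #|(f :&: Q1) :|: (f :&: Q2)|.
      apply: subset_leq_card; rewrite -setIUr; apply/subsetP => u uf.
      by rewrite inE uf (subsetP fsub u uf).
    rewrite (Hc fE) cardsU => H; apply: (leq_trans H); exact: leq_subr.
  have pairs : forall Q, 1 < #|f :&: Q| ->
      exists u v, [/\ u \in f, v \in f, u \in Q, v \in Q & u != v].
    move=> Q /card_gt1P[u [v [uQ vQ uv]]]; move: uQ vQ; rewrite !inE => /andP[uf uQ] /andP[vf vQ].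
    by exists u, v.
  have fin := fun u v (uf : u \in f) (vf : v \in f) (uv : u != v) => tt.
  case: (leqP 2 #|f :&: Q1|) => h.
    have [u [v [uf vf uQ vQ uv]]] := pairs Q1 h.
    move: uQ vQ; rewrite !inE -!orbA => /or4P[]/eqP? /or4P[]/eqP?; subst u v;
      first [ contra_neq | (by rewrite uf vf /= ?orbT)
            | pairT fE AE uf vf uv | pairT fE XA2E uf vf uv | pairT fE BE uf vf uv
            | pairT fE YA2E uf vf uv | pairT fE C1E uf vf uv ].
  have h2 : 1 < #|f :&: Q2|.
    rewrite ltnNge; apply/negP => hb; move: c3; rewrite ltnNge.
    by rewrite ltnS in h; rewrite (leq_add h hb).
  have [u [v [uf vf uQ vQ uv]]] := pairs Q2 h2.
  move: uQ vQ; rewrite !inE -!orbA => /or4P[]/eqP? /or4P[]/eqP?; subst u v;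
    first [ contra_neq | (by rewrite uf vf /= ?orbT)
          | pairT fE AE' uf vf uv | pairT fE XB2E uf vf uv | pairT fE BE' uf vf uv
          | pairT fE YB2E uf vf uv | pairT fE C2E uf vf uv ].
pose Ea := [set g in E | (a2 \in g) && (a4 \in g)].
pose Eb := [set g in E | (b2 \in g) && (b4 \in g)].
have sub : ES \subset ([set g in s11] :|: Ea) :|: Eb.
  apply/subsetP => g gES; have := ESc g gES; move: gES; rewrite inE => /andP[gE _].
  case/or3P => H; rewrite !in_setU.
  - by apply/orP; left; apply/orP; left; rewrite inE.
  - by apply/orP; left; apply/orP; right; rewrite inE gE.
  - by apply/orP; right; rewrite inE gE.
have c11 : #|[set g in s11]| <= 11 by rewrite cardsE; apply: card_size.
have cEa : #|Ea| <= 1.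
  apply/card_le1_eqP => g h; rewrite !inE => /andP[gE /andP[ga2 ga4]] /andP[hE /andP[ha2 ha4]].
  first [exact: (L_uniq gE hE a2a4 ga2 ha2 ga4 ha4) | exact: (L_uniq hE gE a2a4 ha2 ga2 ha4 ga4)].
have cEb : #|Eb| <= 1.
  apply/card_le1_eqP => g h; rewrite !inE => /andP[gE /andP[gb2 gb4]] /andP[hE /andP[hb2 hb4]].
  first [exact: (L_uniq gE hE b2b4 gb2 hb2 gb4 hb4) | exact: (L_uniq hE gE b2b4 hb2 gb2 hb4 gb4)].
have cardU_le : forall A B : {set {set T}}, #|A :|: B| <= #|A| + #|B|.
  by move=> A0 B0; rewrite cardsU leq_subr.
have cES : #|ES| <= 13.
  apply: (leq_trans (subset_leq_card sub)); apply: (leq_trans (cardU_le _ _)).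
  apply: (leq_trans (leq_add (cardU_le _ _) (leqnn _))).
  exact: (leq_add (leq_add c11 cEa) cEb).
split => //.
by move=> f; rewrite inE => /andP[fE fSn]; exact: cl.
Qed.

End Crown.

Unset Implicit Arguments.

Theorem lemma2p1 (T : finType) (E : {set {set T}}) (x y z : T) :
  linear3 E -> crown_free E ->
  [set x; y; z] \in E ->
  5 <= deg E x -> 5 <= deg E y -> 4 <= deg E z ->
  let S := \bigcup_(f in E | f :&: [set x; y; z] != set0) f in
  let ES := [set f in E | f :&: S != set0] in
  [/\ #|S| = 11,
      (forall v, v \in S -> deg E v <= 5),
      #|ES| <= 13 &
      (forall f, f \in ES -> f \subset S)].
Proof.
move=> [Hc Hl] Hcf He dx dy dz.
exact: (mainL Hc Hl Hcf He dx dy dz).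
Qed.
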